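(* For all integers $r\geqslant 1$ and $0\leqslant j\leqslant r$, in $\mathbb{C}[\alpha,\beta,\gamma]$ we have: (i) $\rho_j\phi_{r-j}\zeta_{r-j}\in J_r$; (ii) $\alpha\,\eta_j\psi_{r-j}\zeta_{r-j}\in J_r$.
   Context: Polynomials $\zeta_k\in\mathbb{C}[\alpha,\beta,\gamma]$: $\zeta_i=0$ for $i<0$, $\zeta_0=1$, $\zeta_{k+1}=\alpha\zeta_k+k^2(\beta+(-1)^k8)\zeta_{k-1}+2k(k-1)\gamma\zeta_{k-2}$ for $k\geqslant0$; $J_k$ is the ideal $(\zeta_k,\zeta_{k+1},\zeta_{k+2})$. Set $\beta_+=\beta+8$, $\beta_-=\beta-8$, $\phi_r=\beta_-^{\lfloor r/2\rfloor+1}\beta_+^{\lceil r/2\rceil}$, $\psi_r=\beta_-^{\lfloor r/2\rfloor}\beta_+^{\lceil r/2\rceil}$, $\rho_j=\beta_-^{2\lfloor (j-1)/2\rfloor}\beta_+^{j-1}$ and $\eta_j=\beta_-^{j-1}\beta_+^{j-1}$ for $j\geqslant1$, and $\rho_j=\eta_j=1$ for $j<1$. *)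

(* Defs.v *)
From HB Require Import structures.
From mathcomp Require Import all_boot all_order all_algebra.
From mathcomp Require Import reals.
From mathcomp Require Import complex.
From mathcomp Require Import mpoly.

Set Implicit Arguments.
Unset Strict Implicit.
Unset Printing Implicit Defensive.

Import GRing.Theory.
Local Open Scope ring_scope.

Section Defs.
Variable R : realType.

Definition Cpoly := {mpoly R[i][3]}.

Definition alpha : Cpoly := 'X_(inord 0).
Definition beta  : Cpoly := 'X_(inord 1).
Definition gamma : Cpoly := 'X_(inord 2).

(* zeta3 k = (zeta_k, zeta_{k-1}, zeta_{k-2}), with zeta_i = 0 for i < 0 *)
Fixpoint zeta3 (k : nat) : Cpoly * Cpoly * Cpoly :=
  match k with
  | 0 => (1, 0, 0)
  | k'.+1 =>
      let: (z0, z1, z2) := zeta3 k' in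
      (alpha * z0
         + (k' ^ 2)%:R * (beta + (-1) ^+ k' * 8) * z1
         + (2 * k' * (k' - 1))%:R * gamma * z2,
       z0, z1)
  end.

Definition zeta (k : nat) : Cpoly := (zeta3 k).1.1.

Definition inJ (k : nat) (p : Cpoly) : Prop :=
  exists a b c : Cpoly, p = a * zeta k + b * zeta k.+1 + c * zeta k.+2.

Definition betap : Cpoly := beta + 8.
Definition betam : Cpoly := beta - 8.

Definition phi (r : nat) : Cpoly := betam ^+ (r./2).+1 * betap ^+ (uphalf r).
Definition psi (r : nat) : Cpoly := betam ^+ (r./2) * betap ^+ (uphalf r).
Definition rho (j : nat) : Cpoly :=
  if (1 <= j)%N then betam ^+ (2 * (j.-1)./2) * betap ^+ j.-1 else 1.
Definition eta_ (j : nat) : Cpoly :=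
  if (1 <= j)%N then betam ^+ j.-1 * betap ^+ j.-1 else 1.

End Defs.

(* Main.v *)
Require Import Defs.
From HB Require Import structures.
From mathcomp Require Import all_boot all_order all_algebra.
From mathcomp Require Import reals complex mpoly.
From mathcomp Require Import zify ring.
Import GRing.Theory Num.Theory.
Local Open Scope ring_scope.

Section Aux.
Variable R : realType.
Local Notation P := (Cpoly R).
Local Notation inJ := (@inJ R).
Local Notation zeta := (@zeta R).

Lemma inJ0 k : inJ k 0.
Proof. by exists 0, 0, 0; rewrite !mul0r !addr0. Qed.

Lemma inJD k p q : inJ k p -> inJ k q -> inJ k (p + q).
Proof.
move=> [a [b [c ->]]] [a' [b' [c' ->]]].
exists (a + a'), (b + b'), (c + c'); ring.
Qed.

Lemma inJN k p : inJ k p -> inJ k (- p).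
Proof. move=> [a [b [c ->]]]; exists (-a), (-b), (-c); ring. Qed.

Lemma inJB k p q : inJ k p -> inJ k q -> inJ k (p - q).
Proof. by move=> hp hq; apply: inJD => //; apply: inJN. Qed.

Lemma inJM k q p : inJ k p -> inJ k (q * p).
Proof. move=> [a [b [c ->]]]; exists (q*a), (q*b), (q*c); ring. Qed.

Lemma inJ_z0 k : inJ k (zeta k).
Proof. by exists 1, 0, 0; ring. Qed.
Lemma inJ_z1 k : inJ k (zeta k.+1).
Proof. by exists 0, 1, 0; ring. Qed.
Lemma inJ_z2 k : inJ k (zeta k.+2).
Proof. by exists 0, 0, 1; ring. Qed.

Lemma inJ_nat k n p : n != 0%N -> inJ k (n%:R * p) -> inJ k p.
Proof.
move=> n0 h.
have e : ((n%:R : R[i])^-1)%:MP * (n%:R : P) = 1.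
  rewrite -mpolyC_nat -mpolyCM mulVf ?pnatr_eq0 //.
rewrite -[p]mul1r -e -mulrA; exact: inJM.
Qed.

Definition zm1 k : P := (zeta3 R k).1.2.
Definition zm2 k : P := (zeta3 R k).2.
Definition bfac k : P := beta R + (-1) ^+ k * 8.

Lemma zetaS k : zeta k.+1 = alpha R * zeta k + (k ^ 2)%:R * bfac k * zm1 k
   + (2 * k * (k - 1))%:R * gamma R * zm2 k.
Proof. by rewrite /zeta /zm1 /zm2 /bfac /=; case: (zeta3 R k) => [[a b] c]. Qed.

Lemma zm1S k : zm1 k.+1 = zeta k.
Proof. by rewrite /zeta /zm1 /=; case: (zeta3 R k) => [[a b] c]. Qed.
Lemma zm2S k : zm2 k.+1 = zm1 k.
Proof. by rewrite /zm2 /zm1 /=; case: (zeta3 R k) => [[a b] c]. Qed.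
Lemma zm1_0 : zm1 0 = 0. Proof. by []. Qed.


Lemma gamma_z k : inJ k.+1 (gamma R * zeta k).
Proof.
apply: (@inJ_nat _ (2 * k.+2 * (k.+2 - 1))%N); first by [].
have := zetaS k.+2; rewrite zm1S zm2S zm1S => e.
have -> : (2 * k.+2 * (k.+2 - 1))%:R * (gamma R * zeta k) =
  zeta k.+3 - alpha R * zeta k.+2 - (k.+2 ^ 2)%:R * bfac k.+2 * zeta k.+1.
  rewrite e; ring.
apply: inJB; first apply: inJB.
- exact: inJ_z2.
- apply: inJM; exact: inJ_z1.
- apply: inJM; exact: inJ_z0.
Qed.

Lemma inJ_gamma k p : inJ k p -> inJ k.+1 (gamma R * p).
Proof.
move=> [a [b [c ->]]].
have -> : gamma R * (a * zeta k + b * zeta k.+1 + c * zeta k.+2) =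
  a * (gamma R * zeta k) + (gamma R * b) * zeta k.+1 + (gamma R * c) * zeta k.+2 by ring.
apply: inJD; first apply: inJD.
- apply: inJM; exact: gamma_z.
- apply: inJM; exact: inJ_z0.
- apply: inJM; exact: inJ_z1.
Qed.

Lemma inJ_eq k p q : p = q -> inJ k p -> inJ k q.
Proof. by move=> ->. Qed.

Definition mon a b : P := betam R ^+ a * betap R ^+ b.

Lemma monM a b c d : mon a b * mon c d = mon (a + c) (b + d).
Proof. rewrite /mon !exprD; ring. Qed.

Lemma mon00 : mon 0 0 = 1.
Proof. by rewrite /mon !expr0 mulr1. Qed.

Lemma bfacE k : bfac k = mon (odd k) (~~ odd k).
Proof.
rewrite /bfac /mon /betam /betap -signr_odd; case: (odd k) => /=;
  rewrite ?expr0 ?expr1 ?mulr1 ?mul1r //.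
by rewrite mulN1r.
Qed.

Lemma mon_le k a b a' b' p : (a <= a')%N -> (b <= b')%N ->
  inJ k (mon a b * p) -> inJ k (mon a' b' * p).
Proof.
move=> ha hb h.
have -> : mon a' b' = mon (a' - a) (b' - b) * mon a b.
  by rewrite monM !subnK.
rewrite -mulrA; exact: inJM.
Qed.

Lemma mon_le_gamma k a b a' b' p : (a <= a')%N -> (b <= b')%N ->
  inJ k (mon a b * p) -> inJ k.+1 (mon a' b' * (gamma R * p)).
Proof.
move=> ha hb h.
apply: (@mon_le _ a b) => //.
apply: (@inJ_eq _ (gamma R * (mon a b * p))); first ring.
exact: inJ_gamma.
Qed.

Lemma step n k Y f : inJ n (Y * (f * zeta k.+2)) ->
  inJ n (Y * (f * (alpha R * zeta k.+1))) ->
  inJ n (Y * (f * (gamma R * zm1 k))) -> inJ n (Y * bfac k.+1 * (f * zeta k)).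
Proof.
move=> h1 h2 h3.
apply: (@inJ_nat _ (k.+1 ^ 2)%N); first by rewrite expn_eq0.
have := zetaS k.+1; rewrite zm1S zm2S => e.
have -> : (k.+1 ^ 2)%:R * (Y * bfac k.+1 * (f * zeta k)) =
  Y * (f * zeta k.+2) - Y * (f * (alpha R * zeta k.+1))
   - (2 * k.+1 * (k.+1 - 1))%:R * (Y * (f * (gamma R * zm1 k))).
  rewrite e; ring.
apply: inJB; first apply: inJB => //.
exact: inJM.
Qed.

Lemma zeta0 : zeta 0 = 1. Proof. by []. Qed.
Lemma zeta1 : zeta 1 = alpha R.
Proof. by rewrite zetaS /zm1 /zm2 /= !mul0r !addr0 zeta0 mulr1. Qed.


Definition ua n j := (2 * (j.-1)./2 + ((n - j)./2).+1)%N.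
Definition ub n j := (j.-1 + uphalf (n - j))%N.
Definition va n j := (j.-1 + (n - j)./2)%N.
Definition vb n j := (j.-1 + uphalf (n - j))%N.

Definition Stmt n j := inJ n (mon (ua n j) (ub n j) * zeta (n - j)) /\
  inJ n (mon (va n j) (vb n j) * (alpha R * zeta (n - j))).

Lemma main n : (1 <= n)%N -> forall j, (j <= n)%N -> Stmt n j.
Proof.
elim: n => [//|n IHn] _ j.
elim/ltn_ind: j => -[|j] IHj hj.
  rewrite /Stmt subn0; split; first by apply: inJM; exact: inJ_z0.
  by rewrite mulrA; apply: inJM; exact: inJ_z0.
have hjn : (j <= n)%N by [].
rewrite /Stmt subSS.
set k := (n - j)%N.
have hk : n.+1 = (k + j).+1 by rewrite /k subnK.
have G1 : forall a b, (j >= 2)%N -> (ua n.+1 j.-1 <= a)%N -> (ub n.+1 j.-1 <= b)%N ->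
   inJ n.+1 (mon a b * zeta k.+2).
  move=> a b hj2 ha hb.
  have [h _] := IHj j.-1 (ltac:(lia)) (ltac:(lia)).
  have -> : k.+2 = (n.+1 - j.-1)%N by rewrite /k; lia.
  exact: mon_le h.
have G1' : forall a b, (j >= 2)%N -> (va n.+1 j.-1 <= a)%N -> (vb n.+1 j.-1 <= b)%N ->
   inJ n.+1 (mon a b * (alpha R * zeta k.+2)).
  move=> a b hj2 ha hb.
  have [_ h] := IHj j.-1 (ltac:(lia)) (ltac:(lia)).
  have -> : k.+2 = (n.+1 - j.-1)%N by rewrite /k; lia.
  exact: mon_le h.
have G2 : forall a b f, (j >= 1)%N -> (va n.+1 j <= a)%N -> (vb n.+1 j <= b)%N ->
   inJ n.+1 (mon a b * (f * (alpha R * zeta k.+1))).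
  move=> a b f hj1 ha hb.
  have [_ h] := IHj j (ltac:(lia)) (ltac:(lia)).
  have -> : k.+1 = (n.+1 - j)%N by rewrite /k; lia.
  apply: (@inJ_eq _ (f * (mon a b * (alpha R * zeta (n.+1 - j))))); first ring.
  apply: inJM; exact: mon_le h.
have G3 : forall a0 b0 a b f, (1 <= k)%N -> (a0 <= a)%N -> (b0 <= b)%N ->
   inJ n (mon a0 b0 * (f * zeta (n - j.+1))) ->
   inJ n.+1 (mon a b * (f * (gamma R * zm1 k))).
  move=> a0 b0 a b f hk1 ha hb h.
  have -> : k = (n - j.+1).+1 by rewrite /k; lia.
  rewrite zm1S.
  apply: (@inJ_eq _ (mon a b * (gamma R * (f * zeta (n - j.+1))))); first ring.
  exact: mon_le_gamma h.
have G3z : forall Y f, k = 0%N -> inJ n.+1 (Y * (f * (gamma R * zm1 k))).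
  by move=> Y f ->; rewrite zm1_0 !mulr0; exact: inJ0.
split.
- have -> : mon (ua n.+1 j.+1) (ub n.+1 j.+1) =
     mon (ua n.+1 j.+1 - odd k.+1) (ub n.+1 j.+1 - ~~ odd k.+1) * bfac k.+1.
    rewrite bfacE monM; congr mon; rewrite /ua /ub /k; lia.
  apply: (@inJ_eq _ (mon (ua n.+1 j.+1 - odd k.+1) (ub n.+1 j.+1 - ~~ odd k.+1)
     * bfac k.+1 * (1 * zeta k))); first ring.
  apply: step.
  + rewrite mul1r.
    case: (ltnP j 2) => hj2.
    * case: (posnP j) => j0.
      - have -> : k.+2 = n.+2 by rewrite /k; lia.
        apply: inJM; exact: inJ_z1.
      - have -> : k.+2 = n.+1 by rewrite /k; lia.
        apply: inJM; exact: inJ_z0.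
    * apply: G1 => //; rewrite /ua /ub /k; lia.
  + case: (posnP j) => j0.
    * have -> : k.+1 = n.+1 by rewrite /k; lia.
      rewrite mul1r mulrA; apply: inJM; exact: inJ_z0.
    * apply: G2 => //; rewrite /ua /ub /va /vb /k; lia.
  + case: (posnP k) => k0; first exact: G3z.
    have [h _] := IHn (ltac:(lia)) j.+1 (ltac:(lia)).
    apply: (G3 (ua n j.+1) (ub n j.+1)) => //; try (rewrite /ua /ub /k; lia).
    by rewrite mul1r.
- case: (posnP n) => n0.
    move: hjn; rewrite n0 leqn0 => /eqP j0.
    rewrite /k n0 j0 /va /vb /= mon00 mul1r zeta0 mulr1 -zeta1; exact: inJ_z0.
  have -> : mon (va n.+1 j.+1) (vb n.+1 j.+1) =
     mon (va n.+1 j.+1 - odd k.+1) (vb n.+1 j.+1 - ~~ odd k.+1) * bfac k.+1.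
    rewrite bfacE monM; congr mon; rewrite /va /vb /k; lia.
  apply: (@inJ_eq _ (mon (va n.+1 j.+1 - odd k.+1) (vb n.+1 j.+1 - ~~ odd k.+1)
     * bfac k.+1 * (alpha R * zeta k))); first ring.
  apply: step.
  + case: (ltnP j 2) => hj2.
    * case: (posnP j) => j0.
      - have -> : k.+2 = n.+2 by rewrite /k; lia.
        rewrite mulrA; apply: inJM; exact: inJ_z1.
      - have -> : k.+2 = n.+1 by rewrite /k; lia.
        rewrite mulrA; apply: inJM; exact: inJ_z0.
    * apply: G1' => //; rewrite /va /vb /k; lia.
  + case: (posnP j) => j0.
    * have -> : k.+1 = n.+1 by rewrite /k; lia.
      rewrite mulrA mulrA; apply: inJM; exact: inJ_z0.
    * apply: G2 => //; rewrite /va /vb /k; lia.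
  + case: (posnP k) => k0; first exact: G3z.
    have [_ h] := IHn (ltac:(lia)) j.+1 (ltac:(lia)).
    apply: (G3 (va n j.+1) (vb n j.+1)) => //; rewrite /va /vb /k; lia.
Qed.


Lemma rhoE j : rho R j = mon (2 * (j.-1)./2) j.-1.
Proof. by rewrite /rho /mon; case: j => [|j] //=; rewrite !expr0 mulr1. Qed.
Lemma etaE j : eta_ R j = mon j.-1 j.-1.
Proof. by rewrite /eta_ /mon; case: j => [|j] //=; rewrite !expr0 mulr1. Qed.
Lemma phiE r : phi R r = mon (r./2).+1 (uphalf r). Proof. by []. Qed.
Lemma psiE r : psi R r = mon (r./2) (uphalf r). Proof. by []. Qed.

End Aux.

Theorem lemma4p1 (R : realType) (r j : nat) :
  (1 <= r)%N -> (j <= r)%N ->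
  inJ r (rho R j * phi R (r - j) * zeta R (r - j)) /\
  inJ r (alpha R * eta_ R j * psi R (r - j) * zeta R (r - j)).
Proof.
move=> hr hj; have [h1 h2] := @main R r hr j hj.
rewrite rhoE phiE etaE psiE monM; split; first exact: h1.
apply: (@inJ_eq R r _ _ _ h2); rewrite /va /vb -monM; ring.
Qed.
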